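(* Assume the standing setup below. Then the homogeneous system of linear equations over $\mathbb{F}_p$ \[ \{\,L_I=0 \;:\; I\subseteq X,\ |I|\le s\,\} \] in the unknowns $(x_1,\ldots,x_m)$ has only the trivial solution $x=0$. Consequently $m=|\mathcal{A}|$ is at most the dimension of the $\mathbb{F}_p$-span of $\{L_I: I\subseteq X,\ |I|\le s\}$.
   Context: Standing setup: $p$ is a prime; $K=\{k_1,\ldots,k_r\}$ and $L=\{l_1,\ldots,l_s\}$ are disjoint subsets of $\{0,1,\ldots,p-1\}$; $\mathcal{A}=\{A_1,\ldots,A_m\}$ is a family of distinct subsets of $[n]$ with $|A_i|\pmod p\in K$ for all $i$ and $|A_i\cap A_j|\pmod p\in L$ for all $i\ne j$. Let $X=[n-1]=\{1,\ldots,n-1\}$. Associate a variable $x_i$ to each $A_i$, and for each $I\subseteq X$ define the linear form over $\mathbb{F}_p$ \[ L_I=\sum_{i:\ I\subseteq A_i} x_i . \] For $j\ge 0$ let $\mathbb{P}_j(X)$ denote the set of $j$-element subsets of $X$. *)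

(* Defs.v *)
From HB Require Import structures.
From mathcomp Require Import all_boot all_order all_algebra.
Set Implicit Arguments. Unset Strict Implicit. Unset Printing Implicit Defensive.
Import GRing.Theory.
Local Open Scope ring_scope.

(* The ground set [n] = {1,...,n} is modelled by 'I_n = {0,...,n-1} via k |-> k+1.
   Hence X = [n-1] = {1,...,n-1} corresponds to the ordinals of value < n-1. *)
Definition Xset (n : nat) : {set 'I_n} := [set i : 'I_n | (i.+1 < n)%N].

Definition Leval (p n m : nat) (A : 'I_m -> {set 'I_n}) (I : {set 'I_n})
  (x : 'I_m -> 'F_p) : 'F_p :=
  \sum_(i < m | I \subset A i) x i.

Definition Lrow (p n m : nat) (A : 'I_m -> {set 'I_n}) (I : {set 'I_n})
  : 'rV['F_p]_m :=
  \row_(i < m) (if I \subset A i then 1 else 0).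

(* Main.v *)
Require Import Defs.
From HB Require Import structures.
From mathcomp Require Import all_boot all_order all_algebra zify.
Import GRing.Theory.
Local Open Scope ring_scope.

Lemma cardI_sum n (A B : {set 'I_n}) : #|A :&: B| = (\sum_(b in B) (b \in A))%N.
Proof.
rewrite -sum1_card big_mkcond /= [RHS]big_mkcond /=.
apply: eq_bigr => b _; rewrite in_setI andbC; by case: (b \in B); case: (b \in A).
Qed.

Lemma key p n m (A : 'I_m -> {set 'I_n}) (B : {set 'I_n}) (hB : B \subset Xset n)
  (cs : seq 'F_p) : forall d (x : 'I_m -> 'F_p), (size cs <= d)%N ->
  (forall I : {set 'I_n}, I \subset Xset n -> (#|I| <= d)%N -> Leval A I x = 0) ->
  \sum_i x i * \prod_(c <- cs) (#|A i :&: B|%:R + c) = 0.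
Proof.
elim: cs => [|c cs IH] d x hs hx.
  under eq_bigr do rewrite big_nil mulr1.
  have := hx set0 (sub0set _); rewrite cards0 => /(_ isT).
  by move=> h; rewrite -[RHS]h /Leval; apply: eq_bigl => i; rewrite sub0set.
case: d hs hx => // d hs hx.
transitivity (\sum_i (x i * (#|A i :&: B|%:R + c)) *
    \prod_(c <- cs) (#|A i :&: B|%:R + c)).
  by apply: eq_bigr => i _; rewrite big_cons mulrA.
apply: (IH d) => // I hI hc.
rewrite /Leval; under eq_bigr do rewrite mulrDr.
rewrite big_split /= -mulr_suml.
have -> : \sum_(i < m | I \subset A i) x i = 0.
  by apply: (hx I hI); apply: leq_trans hc _.
rewrite mul0r addr0.
under eq_bigr do rewrite cardI_sum natr_sum mulr_sumr.
rewrite exchange_big /=; apply: big1 => b hb.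
have -> : \sum_(i < m | I \subset A i) x i * (b \in A i)%:R = Leval A (b |: I) x.
  rewrite /Leval big_mkcond [RHS]big_mkcond /=; apply: eq_bigr => i _.
  rewrite subUset sub1set; case: (b \in A i); case: (I \subset A i) => //=;
  by rewrite ?mulr1 ?mulr0.
apply: hx; first by rewrite subUset sub1set hI (subsetP hB b hb).
rewrite cardsU1; case: (b \notin I) => /=; rewrite ?add1n ?add0n //; exact: leq_trans hc (leqnSn d).
Qed.

Lemma notX n (a b : 'I_n) : a \notin Xset n -> b \notin Xset n -> a = b.
Proof.
rewrite !inE -!leqNgt => ha hb; apply: val_inj => /=.
have := ltn_ord a; have := ltn_ord b; move: ha hb; lia.
Qed.

Lemma cardI_eps n (A1 A2 : {set 'I_n}) :
  ~~ (A1 \subset Xset n) || (A2 \subset Xset n) ->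
  #|A1 :&: A2| = (#|A1 :&: (A2 :&: Xset n)| + ~~ (A2 \subset Xset n))%N.
Proof.
case h2: (A2 \subset Xset n) => /= h1.
  by rewrite addn0; move/setIidPl: h2 => ->.
rewrite orbF in h1.
rewrite setIA -(cardsID (Xset n) (A1 :&: A2)); congr (_ + _)%N.
move/negbT: h2 => /subsetPn [b hb2 hbX]; move: h1 => /subsetPn [a ha1 haX].
have eab := @notX _ _ _ haX hbX; subst b.
apply/eqP; rewrite eqn_leq; apply/andP; split.
  apply/card_le1_eqP => u v /setDP [_ hu] /setDP [_ hv].
  by rewrite (@notX _ _ _ hu haX) (@notX _ _ _ hv haX).
by apply/card_gt0P; exists a; rewrite in_setD in_setI ha1 hb2 haX.
Qed.

Lemma part1 (p n m : nat) (K L : seq nat) (A : 'I_m -> {set 'I_n}) :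
  prime p -> all (fun l => (l < p)%N) L ->
  (forall k, k \in K -> k \notin L) ->
  (forall i, (#|A i| %% p)%N \in K) ->
  (forall i j, i != j -> (#|A i :&: A j| %% p)%N \in L) ->
  (forall x : 'I_m -> 'F_p,
      (forall I : {set 'I_n}, I \subset Xset n -> (#|I| <= size L)%N ->
         Leval A I x = 0) ->
      forall i, x i = 0).
Proof.
move=> hp hLp hKL hK hL x hx.
pose eps j := ~~ (A j \subset Xset n).
pose f j i := \prod_(l <- L) (#|A i :&: A j|%:R - l%:R : 'F_p).
pose f' j i := \prod_(l <- L) (#|A i :&: (A j :&: Xset n)|%:R + ((eps j)%:R - l%:R) : 'F_p).
have Fz j i : i != j -> f j i = 0.
  move=> hij; rewrite /f (big_rem _ (hL i j hij)) /= Fp_nat_mod // subrr mul0r //.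
have Fnz j : f j j != 0.
  rewrite /f prodf_seq_neq0; apply/allP => l hl /=; rewrite setIid subr_eq0.
  apply/negP => /eqP h; have := congr1 (fun z : 'F_p => nat_of_ord z) h.
  rewrite /= !(val_Fp_nat hp).
  rewrite (modn_small (allP hLp l hl)) => he.
  by move: (hKL _ (hK j)); rewrite he hl.
have Fs j : \sum_i x i * f' j i = 0.
  have := @key p n m A (A j :&: Xset n) (subsetIr _ _)
     (map (fun l => (eps j)%:R - l%:R) L) (size L) x.
  rewrite size_map leqnn => /(_ isT hx) h; rewrite -[RHS]h.
  by apply: eq_bigr => i _; rewrite /f' big_map.
have Ff j i : eps i || ~~ eps j -> f' j i = f j i.
  move=> h; rewrite /f /f'; apply: eq_big_seq => l _.
  rewrite (@cardI_eps _ (A i) (A j)) ?natrD ?addrA //.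
  by move: h; rewrite /eps negbK.
have S1 j : ~~ eps j -> x j = 0.
  move=> hj; have := Fs j; rewrite (bigD1 j) //= big1 ?addr0.
    by rewrite Ff ?hj ?orbT // => /eqP; rewrite mulf_eq0 (negbTE (Fnz j)) orbF => /eqP.
  by move=> i hij; rewrite Ff ?hj ?orbT // Fz ?mulr0.
move=> j; case hj: (eps j); last by apply: S1; rewrite hj.
have := Fs j; rewrite (bigD1 j) //= big1 ?addr0.
  by rewrite Ff ?hj ?orbT // => /eqP; rewrite mulf_eq0 (negbTE (Fnz j)) orbF => /eqP.
move=> i hij; case hi: (eps i); first by rewrite Ff ?hi // Fz ?mulr0.
by rewrite S1 ?hi ?mul0r.
Qed.

Theorem mainTheorem3 (p n m : nat) (K L : seq nat) (A : 'I_m -> {set 'I_n}) :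
  prime p ->
  uniq K -> uniq L ->
  all (fun k => (k < p)%N) K -> all (fun l => (l < p)%N) L ->
  (forall k, k \in K -> k \notin L) ->
  injective A ->
  (forall i, (#|A i| %% p)%N \in K) ->
  (forall i j, i != j -> (#|A i :&: A j| %% p)%N \in L) ->
  (forall x : 'I_m -> 'F_p,
      (forall I : {set 'I_n}, I \subset Xset n -> (#|I| <= size L)%N ->
         Leval A I x = 0) ->
      forall i, x i = 0)
  /\
  (m <= \rank (\sum_(I : {set 'I_n} | (I \subset Xset n) && (#|I| <= size L)%N)
                 <<Lrow p A I>>)%MS)%N.
Proof.
move=> hp _ _ _ hLp hKL _ hK hL.
have P1 := @part1 p n m K L A hp hLp hKL hK hL.
split => //.
set S := (\sum_(I : {set 'I_n} | _) _)%MS.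
rewrite leqNgt; apply/negP => hlt.
set C := cokermx S.
have hr : (0 < \rank C)%N by rewrite /C mxrank_coker subn_gt0.
have : ~~ [forall i, forall j, C i j == 0].
  apply/negP => /forallP h; move: hr; rewrite lt0n mxrank_eq0 => /negP; apply.
  apply/eqP/matrixP => i j.
  by rewrite [RHS]mxE; apply/eqP; move/forallP: (h i) => /(_ j).
move/forallPn => [i /forallPn [j hij]].
have := P1 (fun k => C k j); move=> /(_ _ i) h; move: hij; rewrite h ?eqxx //.
move=> I hI hc.
have hsub : (Lrow p A I <= S)%MS.
  have h1 : (Lrow p A I <= <<Lrow p A I>>)%MS by rewrite genmxE.
  apply: submx_trans h1 _; apply: (sumsmx_sup I) => //; by rewrite hI hc.
move: hsub; rewrite submxE => /eqP /matrixP /(_ 0 j); rewrite !mxE => <-.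
rewrite /Leval big_mkcond /=; apply: eq_bigr => k _; idtac.
rewrite /Lrow [X in _ = X * _]mxE; by case: (I \subset A k); rewrite ?mul1r ?mul0r.
Qed.
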